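(* Let $\mathcal{L}$ be a language with semantic structure $\mathcal{S}=(\Sigma,I)$ and let $A$ be an abstract domain of $\wp(\Sigma)_\subseteq$ with Galois insertion $(\alpha,\wp(\Sigma),A,\gamma)$. (1) If $\mathcal{S}^\sharp_1=(A,I^\sharp_1)$ and $\mathcal{S}^\sharp_2=(A,I^\sharp_2)$ are abstract semantic structures on $A$ whose abstract semantics $[\![\cdot]\!]_{\mathcal{S}^\sharp_1}$ and $[\![\cdot]\!]_{\mathcal{S}^\sharp_2}$ are both strongly preserving for $\mathcal{L}$, then $[\![\cdot]\!]_{\mathcal{S}^\sharp_1}=[\![\cdot]\!]_{\mathcal{S}^\sharp_2}$. (2) If $\mathcal{S}^\sharp=(A,I^\sharp)$ is an abstract semantic structure on $A$ whose abstract semantics is strongly preserving for $\mathcal{L}$, then the abstract semantics $[\![\cdot]\!]^A_{\mathcal{S}}$ induced by $A$ is strongly preserving for $\mathcal{L}$.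
   Context: A language $\mathcal{L}$ has formulae $\varphi::=p\mid f(\varphi_1,\dots,\varphi_n)$, $p$ in a set $AP$ of atoms, $f$ in a finite set $Op$ of operators of arity $\ge1$. A semantic structure $\mathcal{S}=(\Sigma,I)$ gives $\mathbf{p}=I(p)\subseteq\Sigma$ and $\mathbf{f}=I(f):\wp(\Sigma)^{n}\to\wp(\Sigma)$, with $[\![p]\!]_{\mathcal{S}}=\mathbf{p}$, $[\![f(\varphi_1,..,\varphi_n)]\!]_{\mathcal{S}}=\mathbf{f}([\![\varphi_1]\!]_{\mathcal{S}},..,[\![\varphi_n]\!]_{\mathcal{S}})$. A Galois insertion $(\alpha,\wp(\Sigma),A,\gamma)$: $A$ complete lattice, monotone $\alpha,\gamma$ with $\alpha(S)\le_A a\iff S\subseteq\gamma(a)$, $\alpha\circ\gamma=\mathrm{id}$. An abstract semantic structure $(A,I^\sharp)$ assigns $I^\sharp(p)\in A$, $I^\sharp(f):A^n\to A$ and induces $[\![\cdot]\!]_{\mathcal{S}^\sharp}:\mathcal{L}\to A$ compositionally. The abstract semantics induced by $A$ is that of the structure $(A,I^A)$ with $I^A(p)=\alpha(\mathbf{p})$, $I^A(f)=\alpha\circ\mathbf{f}\circ(\gamma,\dots,\gamma)$; it is written $[\![\cdot]\!]^A_{\mathcal{S}}$. An abstract semantics $[\![\cdot]\!]^\sharp:\mathcal{L}\to A$ is strongly preserving for $\mathcal{L}$ if for all $\varphi\in\mathcal{L}$, $S\subseteq\Sigma$: $\alpha(S)\le_A[\![\varphi]\!]^\sharp\iff S\subseteq[\![\varphi]\!]_{\mathcal{S}}$.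 *)

(* Defs.v *)
From mathcomp Require Import all_boot all_order.
Set Implicit Arguments. Unset Strict Implicit. Unset Printing Implicit Defensive.
Import Order.TTheory.
Local Open Scope order_scope.

Definition pset (Sigma : Type) := Sigma -> Prop.
Definition psubset (Sigma : Type) (S T : pset Sigma) : Prop := forall s, S s -> T s.

Inductive form (AP : Type) (Op : Type) (arity : Op -> nat) : Type :=
| fatom : AP -> form AP arity
| fapp : forall f : Op, ('I_(arity f) -> form AP arity) -> form AP arity.
Arguments fatom {AP Op arity} _.
Arguments fapp {AP Op arity} f _.

Fixpoint sem (AP Op : Type) (arity : Op -> nat) (D : Type)
  (Ip : AP -> D) (If : forall f : Op, ('I_(arity f) -> D) -> D)
  (phi : form AP arity) : D :=
  match phi with
  | fatom p => Ip p
  | fapp f args => If f (fun i => sem Ip If (args i))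
  end.

Definition complete_lattice (d : Order.disp_t) (A : porderType d) : Prop :=
  forall X : A -> Prop, exists s : A,
    (forall x, X x -> x <= s) /\ (forall u, (forall x, X x -> x <= u) -> s <= u).

Definition galois_insertion (Sigma : Type) (d : Order.disp_t) (A : porderType d)
  (alpha : pset Sigma -> A) (gamma : A -> pset Sigma) : Prop :=
  complete_lattice A /\
  (forall S T, psubset S T -> alpha S <= alpha T) /\
  (forall a b, a <= b -> psubset (gamma a) (gamma b)) /\
  (forall S a, alpha S <= a <-> psubset S (gamma a)) /\
  (forall a, alpha (gamma a) = a).

Definition strongly_preserving (AP Op : Type) (arity : Op -> nat) (Sigma : Type)
  (Ip : AP -> pset Sigma) (If : forall f : Op, ('I_(arity f) -> pset Sigma) -> pset Sigma)
  (d : Order.disp_t) (A : porderType d) (alpha : pset Sigma -> A)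
  (asem : form AP arity -> A) : Prop :=
  forall (phi : form AP arity) (S : pset Sigma),
    alpha S <= asem phi <-> psubset S (sem Ip If phi).

Definition induced_Ip (AP Sigma : Type) (d : Order.disp_t) (A : porderType d)
  (alpha : pset Sigma -> A) (Ip : AP -> pset Sigma) : AP -> A :=
  fun p => alpha (Ip p).
Definition induced_If (Op : Type) (arity : Op -> nat) (Sigma : Type)
  (d : Order.disp_t) (A : porderType d)
  (alpha : pset Sigma -> A) (gamma : A -> pset Sigma)
  (If : forall f : Op, ('I_(arity f) -> pset Sigma) -> pset Sigma) :
  forall f : Op, ('I_(arity f) -> A) -> A :=
  fun f xs => alpha (If f (fun i => gamma (xs i))).

(* Main.v *)
Require Import Defs.
From mathcomp Require Import all_boot all_order.
From Stdlib Require Import FunctionalExtensionality PropExtensionality.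
Local Open Scope order_scope.

Theorem lemma5p3 (AP : Type) (Op : finType) (arity : Op -> nat)
  (arity_pos : forall f : Op, (0 < arity f)%N)
  (Sigma : Type) (Ip : AP -> pset Sigma)
  (If : forall f : Op, ('I_(arity f) -> pset Sigma) -> pset Sigma)
  (d : Order.disp_t) (A : porderType d)
  (alpha : pset Sigma -> A) (gamma : A -> pset Sigma)
  (GI : galois_insertion alpha gamma) :
  (forall (Ip1 Ip2 : AP -> A)
          (If1 If2 : forall f : Op, ('I_(arity f) -> A) -> A),
      strongly_preserving Ip If alpha (sem Ip1 If1) ->
      strongly_preserving Ip If alpha (sem Ip2 If2) ->
      forall phi : form AP arity, sem Ip1 If1 phi = sem Ip2 If2 phi)
  /\
  (forall (Ip' : AP -> A) (If' : forall f : Op, ('I_(arity f) -> A) -> A),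
      strongly_preserving Ip If alpha (sem Ip' If') ->
      strongly_preserving Ip If alpha
        (sem (induced_Ip alpha Ip) (induced_If alpha gamma If))).
Proof.
have [_ [mono [_ [adj ag]]]] := GI.
have key : forall (asem : form AP arity -> A),
    strongly_preserving Ip If alpha asem ->
    forall phi, asem phi = alpha (sem Ip If phi).
  move=> asem sp phi; apply/Order.POrderTheory.le_anti/andP; split.
  - rewrite -{1}[asem phi]ag; apply: mono.
    by apply/(sp phi); rewrite ag.
  - by apply/(sp phi) => s.
split.
  move=> Ip1 Ip2 If1 If2 h1 h2 phi.
  by rewrite (key _ h1) (key _ h2).
move=> Ip' If' sp.
have ga : forall phi, gamma (alpha (sem Ip If phi)) = sem Ip If phi.
  move=> phi; apply: functional_extensionality => s.
  apply: propositional_extensionality; split.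
  - move: s; apply/(sp phi); rewrite ag (key _ sp) //.
  - by move: s; apply/adj.
have E : forall phi, sem (induced_Ip alpha Ip) (induced_If alpha gamma If) phi
                   = alpha (sem Ip If phi).
  elim=> [p|f args IH] //=.
  rewrite /induced_If; congr (alpha (If f _)).
  by apply: functional_extensionality => i; rewrite IH ga.
move=> phi S; rewrite E -(key _ sp); exact: sp.
Qed.
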